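(* Let $V$ be a vertex algebra over a field $\mathbb{F}$ of characteristic $p$, and let $(W,Y_W)$ be a $V$-module. Write $Y_W(a,x)=\sum_{n\in\mathbb{Z}}a_nx^{-n-1}$. Let $a\in V$ be such that on $W$ the operators $a_n$ ($n\in\mathbb{N}$) mutually commute and the operators $a_{-n}$ ($n\in\mathbb{Z}_+$) mutually commute. Then for every $n\in\mathbb{Z}_+$, $$Y_W\big((a_{-n})^p\mathbf 1,x\big)=\sum_{j\ge0}\binom{n+j-1}{j}a_{-n-j}^p\,x^{jp}+\sum_{j\ge0}(-1)^{1-n}\binom{n+j-1}{j}a_j^p\,x^{-p(n+j)}.$$ Here $(a_{-n})^p\mathbf 1\in V$ is computed with the vertex operators of $V$, and the right-hand side uses the operators on $W$. In particular, $$Y_W\big((a_{-1})^p\mathbf 1,x\big)=\sum_{j\in\mathbb{Z}}a_j^p\,x^{-p(j+1)}.$$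
   Context: Let $p$ be a prime and $\mathbb{F}$ a field of characteristic $p$. Integers, and binomial coefficients $\binom{n}{k}=\frac{n(n-1)\cdots(n-k+1)}{k!}$ for $n\in\mathbb{Z}$, $k\in\mathbb{N}$, are viewed as elements of the prime subfield of $\mathbb{F}$. We write $\mathbb{Z}_+$ for the positive integers. <b>Formal calculus.</b> For every $n\in\mathbb{Z}$ set $(x+y)^n=\sum_{k\ge0}\binom{n}{k}x^{n-k}y^k$, and let $\delta(x)=\sum_{n\in\mathbb{Z}}x^n$. <b>Vertex algebras.</b> A vertex algebra over $\mathbb{F}$ is a vector space $V$ with a vector $\mathbf 1$ and a linear map $$Y(\cdot,x):V\to(\mathrm{End}\,V)[[x,x^{-1}]],\qquad v\mapsto Y(v,x)=\sum_{n\in\mathbb{Z}}v_nx^{-n-1},$$ satisfying the following conditions for all $u,v\in V$: <ul> <li>$u_nv=0$ for $n\gg0$;</li> <li>$Y(\mathbf 1,x)=\mathrm{id}_V$;</li> <li>$Y(v,x)\mathbf 1\in V[[x]]$ and its constant term is $v$;</li> <li>the Jacobi identity $$x_0^{-1}\delta\!\left(\tfrac{x_1-x_2}{x_0}\right)Y(u,x_1)Y(v,x_2)-x_0^{-1}\delta\!\left(\tfrac{x_2-x_1}{-x_0}\right)Y(v,x_2)Y(u,x_1)=x_2^{-1}\delta\!\left(\tfrac{x_1-x_0}{x_2}\right)Y(Y(u,x_0)v,x_2).$$</li> </ul> A $V$-module is a vector space $W$ with a linear map $Y_W(\cdot,x):V\to(\mathrm{End}\,W)[[x,x^{-1}]]$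 satisfying truncation ($u_nw=0$ for $n\gg0$), $Y_W(\mathbf 1,x)=\mathrm{id}_W$, and the same Jacobi identity with $Y_W$ in place of $Y$ in the three products of vertex operators. *)

(* Defs.v *)
From HB Require Import structures.
From mathcomp Require Import all_boot all_order all_algebra.
Set Implicit Arguments. Unset Strict Implicit. Unset Printing Implicit Defensive.
Import Order.TTheory GRing.Theory Num.Theory.
Local Open Scope ring_scope.

(* Generalized binomial coefficient binom(n,k) = n(n-1)...(n-k+1)/k! for
   n : int, k : nat, as an integer:
     binom(m,k) = 'C(m,k) for m >= 0,
     binom(-(m+1),k) = (-1)^k 'C(m+k,k). *)
Definition binz (n : int) (k : nat) : int :=
  match n with
  | Posz m => ('C(m, k))%:Z
  | Negz m => (-1) ^+ k * ('C(m + k, k))%:Z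
  end.

(* Borcherds identity = the coefficient of x0^{-l-1} x1^{-m-1} x2^{-n-1} in
   the Jacobi identity (with the expansion conventions (x+y)^n = sum binom(n,k)
   x^{n-k} y^k).  Here Y gives the vertex operators of V (used for Y(u,x0)v)
   and YW the ones acting on the space W (W = V for the algebra itself).
   The infinite sums over i are finite by truncation; we state the identity
   for every cut-off N beyond which all summands vanish. *)
Definition borcherds (F : fieldType) (V W : lmodType F)
    (Y : V -> int -> V -> V) (YW : V -> int -> W -> W) : Prop :=
  forall (u v : V) (w : W) (l m n : int) (N : nat),
    (forall i : nat, (N <= i)%N ->
       [/\ Y u (l + i%:Z) v = 0, YW v (n + i%:Z) w = 0 & YW u (m + i%:Z) w = 0]) ->
    \sum_(i < N) (binz m i)%:~R *: YW (Y u (l + i%:Z) v) (m + n - i%:Z) w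
    = \sum_(i < N) ((-1) ^+ i * (binz l i)%:~R) *:
        (YW u (l + m - i%:Z) (YW v (n + i%:Z) w)
         - (-1) ^+ `|l|%N *: YW v (l + n - i%:Z) (YW u (m + i%:Z) w)).

(* A vertex algebra structure on the F-vector space V:
   vop u n v = u_n v, i.e. Y(u,x) = sum_n u_n x^{-n-1}. *)
Record vertex_algebra (F : fieldType) (V : lmodType F) := VertexAlgebra {
  vac : V;
  vop : V -> int -> V -> V;
  vop_linl : forall (c : F) (u u' : V) (n : int) (v : V),
      vop (c *: u + u') n v = c *: vop u n v + vop u' n v;
  vop_linr : forall (c : F) (u : V) (n : int) (v v' : V),
      vop u n (c *: v + v') = c *: vop u n v + vop u n v';
  vop_trunc : forall u v : V, exists N : int, forall n : int, N <= n -> vop u n v = 0;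
  vop_vac : forall (n : int) (v : V), vop vac n v = if n == -1 then v else 0;
  vop_creation : forall (v : V) (n : int), 0 <= n -> vop v n vac = 0;
  vop_creation_const : forall v : V, vop v (-1) vac = v;
  vop_jacobi : borcherds vop vop
}.

Record va_module (F : fieldType) (V : lmodType F) (A : vertex_algebra V)
    (W : lmodType F) := VAModule {
  mop : V -> int -> W -> W;
  mop_linl : forall (c : F) (u u' : V) (n : int) (w : W),
      mop (c *: u + u') n w = c *: mop u n w + mop u' n w;
  mop_linr : forall (c : F) (u : V) (n : int) (w w' : W),
      mop u n (c *: w + w') = c *: mop u n w + mop u n w';
  mop_trunc : forall (u : V) (w : W), exists N : int,
      forall n : int, N <= n -> mop u n w = 0;
  mop_vac : forall (n : int) (w : W), mop (vac A) n w = if n == -1 then w else 0;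
  mop_jacobi : borcherds (vop A) mop
}.

(* The formal series  sum_{j >= 0} c_j x^{e0 + d*j}  (d <> 0), given by its
   coefficient of x^e, applied to w. *)
Definition arith_series (F : fieldType) (W : lmodType F) (d e0 : int)
    (c : nat -> W -> W) (e : int) (w : W) : W :=
  if [&& d != 0, (d %| (e - e0))%Z & 0 <= ((e - e0) %/ d)%Z]
  then c `|((e - e0) %/ d)%Z|%N w else 0.

(* Main.v *)
Require Import Defs.
From HB Require Import structures.
From mathcomp Require Import all_boot all_order all_algebra.
From mathcomp Require Import functions boolp.
From mathcomp Require Import zify.
Import Order.TTheory GRing.Theory Num.Theory.
Local Open Scope ring_scope.

Section Frob.
Variables (F : fieldType) (Xt : lmodType F).
Local Notation X := Xt.
Definition lin (f : X -> X) := forall c x y, f (c *: x + y) = c *: f x + f y.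
Definition comm (f g : X -> X) := forall x, f (g x) = g (f x).

Lemma lin0 f : lin f -> f 0 = 0.
Proof.
move=> H; have := H 1 0 0; rewrite scaler0 add0r scale1r => h.
by apply: (@addIr _ (f 0)); rewrite add0r -h.
Qed.
Lemma linD f : lin f -> forall x y, f (x + y) = f x + f y.
Proof. by move=> H x y; have := H 1 x y; rewrite !scale1r. Qed.
Lemma linZ f : lin f -> forall c x, f (c *: x) = c *: f x.
Proof. by move=> H c x; rewrite -[c *: x]addr0 H lin0 // addr0. Qed.
Lemma lin_sum f I (r : seq I) (G : I -> X) : lin f ->
  f (\sum_(i <- r) G i) = \sum_(i <- r) f (G i).
Proof.
move=> H; elim: r => [|i r IH]; first by rewrite !big_nil lin0.
by rewrite !big_cons linD // IH.
Qed.
Lemma lin_add f g : lin f -> lin g -> lin (fun x => f x + g x).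
Proof.
move=> Hf Hg c x y; rewrite Hf Hg scalerDr.
by rewrite -!addrA; congr (_ + _); rewrite addrCA.
Qed.
Lemma lin_bigsum I (r : seq I) (G : I -> X -> X) :
  (forall i, lin (G i)) -> lin (fun x => \sum_(i <- r) G i x).
Proof.
move=> H c x y; elim: r => [|i r IH]; first by rewrite !big_nil scaler0 addr0.
by rewrite !big_cons IH H scalerDr -!addrA; congr (_ + _); rewrite addrCA.
Qed.
Lemma comm_iter f g k : comm f g -> forall x, f (iter k g x) = iter k g (f x).
Proof. by move=> H; elim: k => [|k IH] x //=; rewrite H IH. Qed.
Lemma lin_iter f k : lin f -> lin (iter k f).
Proof. by move=> H; elim: k => [|k IH] c x y //=; rewrite IH H. Qed.

Lemma iter_addE f g : lin f -> lin g -> comm f g -> forall k x,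
  iter k (fun x => f x + g x) x
  = \sum_(j < k.+1) 'C(k, j)%:R *: iter j f (iter (k - j) g x).
Proof.
move=> Hf Hg Hc; elim=> [|k IH] x.
  by rewrite big_ord1 /= scale1r.
rewrite iterS IH /= lin_sum // lin_sum //.
have Hgf : forall j y, g (iter j f y) = iter j f (g y).
  by move=> j y; rewrite comm_iter // => z; rewrite Hc.
rewrite (eq_bigr (fun j : 'I_k.+1 => 'C(k,j)%:R *: iter j.+1 f (iter (k-j) g x))); last first.
  by move=> j _; rewrite (linZ _ Hf).
rewrite [in X in _ + X = _](eq_bigr (fun j : 'I_k.+1 => 'C(k,j)%:R *: iter j f (iter (k-j).+1 g x))); last first.
  by move=> j _; rewrite (linZ _ Hg) Hgf.
rewrite [RHS]big_ord_recl [Z in _ = _ + Z](eq_bigr (fun j : 'I_k.+1 => 'C(k,j)%:R *: iter j.+1 f (iter (k-j) g x) + 'C(k,j.+1)%:R *: iter j.+1 f (iter (k-j) g x))); last first.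
  by move=> j _ /=; rewrite (_ : bump 0 j = j.+1) // add0n binS natrD scalerDl subSS addrC.
rewrite big_split /= bin0 scale1r.
rewrite [Z in _ + Z = _]big_ord_recl /= bin0 scale1r ?subn0.
rewrite [Z in _ = _ + (_ + Z)]big_ord_recr /= bin_small // scale0r addr0.
rewrite [RHS]addrCA; congr (_ + (_ + _)).
apply: eq_bigr => j _ /=; rewrite (_ : bump 0 j = j.+1) // ?add0n.
by rewrite -[g (iter _ g x)]iterS subnSK.
Qed.

Lemma iter_frob p f g : p \in [pchar F] -> lin f -> lin g -> comm f g -> forall x,
  iter p (fun x => f x + g x) x = iter p f x + iter p g x.
Proof.
move=> hp Hf Hg Hc x; rewrite iter_addE //.
have p0 : (0 < p)%N by apply: prime_gt0; apply: (pcharf_prime hp).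
case: p hp p0 => [//|p] hp _.
rewrite big_ord_recl /= bin0 scale1r big_ord_recr /=.
rewrite (_ : bump 0 p = p.+1) // binn scale1r subnn /= add0n.
rewrite big1 ?add0r; first by rewrite addrC.
move=> j _ /=; rewrite (_ : bump 0 j = j.+1) // (bin_lt_pcharf_0 hp) ?scale0r //.
by apply/andP; split => //; rewrite ltnS.
Qed.

Lemma iter_frob_sum p I (r : seq I) (G : I -> X -> X) : p \in [pchar F] ->
  (forall i, lin (G i)) -> (forall i j, comm (G i) (G j)) -> forall x,
  iter p (fun x => \sum_(i <- r) G i x) x = \sum_(i <- r) iter p (G i) x.
Proof.
move=> hp Hl Hc; elim: r => [|i r IH] x.
  have p0 : (0 < p)%N by apply: prime_gt0; apply: (pcharf_prime hp).
  rewrite big_nil; case: p hp p0 => [//|p] _ _.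
  by rewrite iterS big_nil.
rewrite big_cons -IH -iter_frob //; last first.
- move=> y; rewrite lin_sum //; apply: eq_bigr => j _; exact: Hc.
- exact: lin_bigsum.
by apply: eq_iter => y; rewrite big_cons.
Qed.
End Frob.
Arguments lin {F Xt}.
Arguments comm {F Xt}.
Arguments lin0 {F Xt f}.
Arguments linD {F Xt f}.
Arguments linZ {F Xt f}.
Arguments lin_sum {F Xt f I}.
Arguments lin_add {F Xt f g}.
Arguments lin_bigsum {F Xt I}.
Arguments comm_iter {F Xt f g}.
Arguments lin_iter {F Xt f}.
Arguments iter_frob {F Xt p f g}.
Arguments iter_frob_sum {F Xt p I}.
Section Main.
Variables (F : fieldType) (p : nat) (hp : p \in [pchar F])
    (V : lmodType F) (A : vertex_algebra V) (W : lmodType F)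
    (M : va_module A W) (a : V).
Hypothesis hcomm_pos : forall (i j : nat) (w : W),
        mop M a i%:Z (mop M a j%:Z w) = mop M a j%:Z (mop M a i%:Z w).
Hypothesis hcomm_neg : forall (i j : nat), (0 < i)%N -> (0 < j)%N -> forall w : W,
        mop M a (- i%:Z) (mop M a (- j%:Z) w)
        = mop M a (- j%:Z) (mop M a (- i%:Z) w).
Variables (n : nat) (hn : (0 < n)%N).

Lemma mop_lin u m : lin (mop M u m).
Proof. by move=> c x y; rewrite mop_linr. Qed.
Lemma mop0 u m : mop M u m 0 = 0.
Proof. exact: (lin0 (mop_lin u m)). Qed.
Lemma mopZ u m c x : mop M u m (c *: x) = c *: mop M u m x.
Proof. exact: (linZ (mop_lin u m)). Qed.

Definition cc (i : nat) : F := ('C(n + i - 1, i))%:R.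
Definition dd (i : nat) : F := (-1) ^+ n.-1 * ('C(n + i - 1, i))%:R.

Lemma borch (v : V) (e : int) (w : W) (N : nat) : (0 < N)%N ->
  (forall i : nat, (N <= i)%N -> vop A a (- n%:Z + i%:Z) v = 0) ->
  (forall i : nat, (N <= i)%N -> mop M v (- e - 1 + i%:Z) w = 0) ->
  (forall i : nat, (N <= i)%N -> mop M a i%:Z w = 0) ->
  mop M (vop A a (- n%:Z) v) (- e - 1) w =
  \sum_(0 <= i < N) cc i *: mop M a (- (n + i)%:Z) (mop M v (- (e - i%:Z) - 1) w)
  + \sum_(0 <= i < N) dd i *: mop M v (- (e + (n + i)%:Z) - 1) (mop M a i%:Z w).
Proof.
move=> N0 h1 h2 h3.
have J := @mop_jacobi _ _ _ _ M a v w (- n%:Z) 0 (- e - 1) N.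
have {J} := J (fun i hi => And3 (h1 i hi) (h2 i hi) (etrans (congr1 (fun z => mop M a z w) (add0r _)) (h3 i hi))).
case: N N0 h1 h2 h3 => [//|N] _ h1 h2 h3.
rewrite big_ord_recl /= big1; last first.
  by move=> i _; rewrite /binz bin0n /= scale0r.
rewrite addr0 add0r addr0 subr0 scale1r => ->.
have [n' En] : exists n', n = n'.+1 by exists n.-1; rewrite prednK.
rewrite !big_mkord -big_split /=; apply: eq_bigr => i _.
have hb : binz (- n%:Z) i = (-1) ^+ i * ('C(n' + i, i))%:Z by rewrite En -NegzE.
rewrite hb intrM rmorphXn rmorphN1 -pmulrn mulrA -exprD addnn -mul2n exprM sqrrN !expr1n mul1r.
rewrite abszN absz_nat scalerBr scalerA /cc /dd En.
rewrite (_ : (n'.+1 + i - 1 = n' + i)%N); last by lia.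
rewrite exprS mulN1r mulrN mulrC scaleNr opprK /=.
congr (_ *: mop M a _ (mop M v _ w) + _ *: mop M v _ (mop M a _ w)); lia.
Qed.

Definition Xs := int -> W -> W.
Definition Li (i : nat) (T : Xs) : Xs :=
  fun e w => cc i *: mop M a (- (n + i)%:Z) (T (e - i%:Z) w).
Definition Rl (l : nat) (T : Xs) : Xs :=
  fun e w => dd l *: T (e + (n + l)%:Z) (mop M a l%:Z w).
Definition Gop (x : nat + nat) : Xs -> Xs :=
  match x with inl i => Li i | inr l => Rl l end.
Definition rr N : seq (nat + nat) := map inl (index_iota 0 N) ++ map inr (index_iota 0 N).
Definition LR N (T : Xs) : Xs := \sum_(x <- rr N) Gop x T.

Lemma Gop_lin x : lin (Gop x).
Proof.
case: x => i c T T'; apply/funext => e; apply/funext => w /=.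
  by rewrite /Li /= mop_linr scalerDr !scalerA mulrC.
by rewrite /Rl /= scalerDr !scalerA mulrC.
Qed.

Lemma Gop_comm x y : comm (Gop x) (Gop y).
Proof.
case: x => i; case: y => j T; apply/funext => e; apply/funext => w /=;
  rewrite /Li /Rl /= ?mopZ !scalerA mulrC.
- rewrite hcomm_neg ?addn_gt0 ?hn //; congr (_ *: mop M a _ (mop M a _ (T _ w))); lia.
- congr (_ *: mop M a _ (T _ _)); lia.
- congr (_ *: mop M a _ (T _ _)); lia.
- rewrite hcomm_pos; congr (_ *: T _ _); lia.
Qed.

Lemma LR_eval N T e w : LR N T e w =
  \sum_(0 <= i < N) cc i *: mop M a (- (n + i)%:Z) (T (e - i%:Z) w)
  + \sum_(0 <= i < N) dd i *: T (e + (n + i)%:Z) (mop M a i%:Z w).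
Proof.
rewrite /LR fct_sumE fct_sumE big_cat !big_map /=.
by [].
Qed.

Definition vk k := iter k (vop A a (- n%:Z)) (vac A).
Definition Tk k : Xs := fun e w => mop M (vk k) (- e - 1) w.

Lemma Tk0E e w : Tk 0 e w = if e == 0 then w else 0.
Proof.
rewrite /Tk /vk /= mop_vac; congr (if _ then _ else _).
by apply/eqP/eqP; lia.
Qed.

Lemma LR_iter0 N k g : iter k (LR N) (Tk 0) g 0 = 0.
Proof.
elim: k g => [|k IH] g; first by rewrite /Tk /= mop0.
rewrite iterS LR_eval big1 ?add0r.
  by rewrite big1 // => i _; rewrite mop0 IH scaler0.
by move=> i _; rewrite IH mop0 scaler0.
Qed.

Definition goodB k w (B : nat) := forall (e : int) (N : nat),
  (B <= N)%N -> e + B%:Z <= N%:Z -> Tk k e w = iter k (LR N) (Tk 0) e w.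

Lemma goodB_mono k w B B' : (B <= B')%N -> goodB k w B -> goodB k w B'.
Proof. move=> hB h e N h1 h2; apply: h; lia. Qed.

Lemma combine (P : nat -> nat -> Prop) s :
  (forall i B B', (B <= B')%N -> P i B -> P i B') ->
  (forall i, (i < s)%N -> exists B, P i B) -> exists B, forall i, (i < s)%N -> P i B.
Proof.
move=> Hm; elim: s => [|s IH] H; first by exists 0%N.
have [B1 h1] := IH (fun i hi => H i (ltnW hi)).
have [B2 h2] := H s (ltnSn s).
exists (maxn B1 B2) => i; rewrite ltnS leq_eqVlt => /orP [/eqP -> | hi].
  by apply: Hm h2; rewrite leq_maxr.
by apply: Hm (h1 i hi); rewrite leq_maxl.
Qed.

Lemma Qk k w : exists B, goodB k w B.
Proof.
elim: k w => [|k IH] w.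
  by exists 0%N => e N _ _.
have [S hS] := mop_trunc M a w.
pose s := `|S|%N.
have hs : forall l : nat, (s <= l)%N -> mop M a l%:Z w = 0.
  by move=> l hl; apply: hS; rewrite /s in hl; lia.
have [Bm hBm] := combine (fun i B => goodB k (mop M a i%:Z w) B) s
  (fun i B B' hB h => goodB_mono _ _ _ _ hB h) (fun i _ => IH (mop M a i%:Z w)).
have [B0 hB0] := IH w.
have [N1 h1] := vop_trunc A a (vk k).
have [N2 h2] := mop_trunc M (vk k) w.
exists (B0 + Bm + n + s + `|N1| + n + `|N2| + 2)%N => e N hBN heN.
rewrite [LHS]/Tk [vk _]/vk iterS -/(vk k).
rewrite (@borch (vk k) e w N); first last.
- move=> i hi; apply: hs; lia.
- move=> i hi; apply: h2; lia.
- move=> i hi; apply: h1; lia.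
- lia.
rewrite iterS LR_eval; congr (_ + _); apply: eq_big_nat => i /andP [_ hi].
  congr (_ *: mop M a _ _); apply: (hB0 (e - i%:Z) N); lia.
case: (ltnP i s) => his.
  congr (_ *: _); apply: (hBm i his); lia.
by rewrite hs // mop0 LR_iter0.
Qed.

Lemma iter_mop0 u m k : iter k (mop M u m) 0 = 0.
Proof. by elim: k => [|k IH] //=; rewrite IH mop0. Qed.

Lemma iter_mopZ u m k c x : iter k (mop M u m) (c *: x) = c *: iter k (mop M u m) x.
Proof. by elim: k => [|k IH] //=; rewrite IH mopZ. Qed.

Lemma iterLi k i T e w : iter k (Li i) T e w =
  cc i ^+ k *: iter k (mop M a (- (n + i)%:Z)) (T (e - (k * i)%:Z) w).
Proof.
elim: k e => [|k IH] e; first by rewrite scale1r subr0.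
rewrite iterS {1}/Li IH mopZ scalerA -exprS -iterS.
congr (_ *: iter _ _ (T _ w)); lia.
Qed.

Lemma iterRl k l T e w : iter k (Rl l) T e w =
  dd l ^+ k *: T (e + (k * (n + l))%:Z) (iter k (mop M a l%:Z) w).
Proof.
elim: k e w => [|k IH] e w; first by rewrite scale1r addr0.
rewrite iterS {1}/Rl IH scalerA -exprS -iterSr.
congr (_ *: T _ _); lia.
Qed.

Lemma sum_hit (N i0 : nat) (P : nat -> bool) (G : nat -> W) : (i0 < N)%N ->
  (forall i, P i = (i == i0)) -> \sum_(0 <= i < N) (if P i then G i else 0) = G i0.
Proof.
move=> hi hP; rewrite (bigD1_seq i0) ?iota_uniq //; last by rewrite mem_index_iota.
rewrite hP eqxx big1; first exact: addr0.
by move=> i hi2; rewrite hP (negbTE hi2).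
Qed.

Lemma sum_nohit (N : nat) (P : nat -> bool) (G : nat -> W) :
  (forall i, ~~ P i) -> \sum_(0 <= i < N) (if P i then G i else 0) = 0.
Proof. by move=> hP; rewrite big1 // => i _; rewrite (negbTE (hP i)). Qed.

Lemma Fnat m : (m%:R : F) ^+ p = m%:R.
Proof. by rewrite -(pFrobenius_autE hp) pFrobenius_aut_nat. Qed.
Lemma Fsign m : ((-1) ^+ m : F) ^+ p = (-1) ^+ m.
Proof.
by rewrite exprAC -(pFrobenius_autE hp) pFrobenius_autN pFrobenius_aut1.
Qed.

Lemma core e w : exists N0 : nat, forall N : nat, (N0 <= N)%N ->
  Tk p e w =
  \sum_(0 <= i < N) (if e == (p * i)%:Z then cc i *: iter p (mop M a (- (n + i)%:Z)) w else 0)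
  + \sum_(0 <= i < N) (if e == - (p * (n + i))%:Z then dd i *: iter p (mop M a i%:Z) w else 0).
Proof.
have [B hB] := Qk p w.
exists (B + `|e|)%N => N hN.
rewrite (hB e N) ?(leq_trans _ hN) ?leq_addr //; last by lia.
rewrite /LR (iter_frob_sum (rr N) Gop hp Gop_lin Gop_comm) fct_sumE fct_sumE.
rewrite big_cat !big_map /=; congr (_ + _); apply: eq_bigr => i _.
  rewrite iterLi Tk0E /cc Fnat -/(cc i).
  have -> : (e - (p * i)%:Z == 0) = (e == (p * i)%:Z) by apply/eqP/eqP; lia.
  by case: ifP => // _; rewrite iter_mop0 scaler0.
rewrite iterRl Tk0E /dd exprMn Fnat Fsign -/(dd i).
have -> : (e + (p * (n + i))%:Z == 0) = (e == - (p * (n + i))%:Z) by apply/eqP/eqP; lia.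
by case: ifP => _; rewrite ?scaler0.
Qed.

Lemma p_gt0 : (0 < p)%N.
Proof. by apply: prime_gt0; apply: (pcharf_prime hp). Qed.

Lemma part1 e w : Tk p e w =
  arith_series p%:Z 0 (fun j w' => cc j *: iter p (mop M a (- (n + j)%:Z)) w') e w
  + arith_series (- p%:Z) (- (p * n)%:Z) (fun j w' => dd j *: iter p (mop M a j%:Z) w') e w.
Proof.
have hp0 := p_gt0.
have [N0 h] := core e w.
rewrite (h (N0 + `|e| + 1)%N); last by lia.
rewrite /arith_series; congr (_ + _).
  case: ifP => H.
    case/and3P: H => _ hd hq.
    have he := divzK hd; move: hq he; set q := ((e - 0) %/ p%:Z)%Z => hq he.
    apply: sum_hit; first by nia.
    by move=> i; apply/eqP/eqP; nia.
  apply: sum_nohit => i; apply/negP => /eqP he; move/negbT: H; apply/negP; rewrite negbK.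
  apply/and3P; split; first by lia.
    by apply/dvdzP; exists i%:Z; lia.
  by rewrite (_ : e - 0 = i%:Z * p%:Z) ?mulzK //; lia.
case: ifP => H.
  case/and3P: H => _ hd hq.
  have he := divzK hd; move: hq he; set q := ((e - _) %/ _)%Z => hq he.
  apply: sum_hit; first by nia.
  by move=> i; apply/eqP/eqP; nia.
apply: sum_nohit => i; apply/negP => /eqP he; move/negbT: H; apply/negP; rewrite negbK.
apply/and3P; split; first by lia.
  by apply/dvdzP; exists i%:Z; lia.
by rewrite (_ : e - - (p * n)%:Z = i%:Z * - p%:Z) ?mulzK //; lia.
Qed.
End Main.
Theorem lemma5 (F : fieldType) (p : nat) (hp : p \in [pchar F])
    (V : lmodType F) (A : vertex_algebra V) (W : lmodType F)
    (M : va_module A W) (a : V)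
    (hcomm_pos : forall (i j : nat) (w : W),
        mop M a i%:Z (mop M a j%:Z w) = mop M a j%:Z (mop M a i%:Z w))
    (hcomm_neg : forall (i j : nat), (0 < i)%N -> (0 < j)%N -> forall w : W,
        mop M a (- i%:Z) (mop M a (- j%:Z) w)
        = mop M a (- j%:Z) (mop M a (- i%:Z) w)) :
  (forall n : nat, (0 < n)%N -> forall (e : int) (w : W),
     mop M (iter p (vop A a (- n%:Z)) (vac A)) (- e - 1) w
     = arith_series p%:Z 0
         (fun j w' => ('C(n + j - 1, j))%:R *: iter p (mop M a (- (n + j)%:Z)) w') e w
       + arith_series (- p%:Z) (- (p * n)%:Z)
         (fun j w' => ((-1) ^+ n.-1 * ('C(n + j - 1, j))%:R)
                        *: iter p (mop M a j%:Z) w') e w)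
  /\
  (forall (e : int) (w : W),
     mop M (iter p (vop A a (-1)) (vac A)) (- e - 1) w
     = if (p%:Z %| e)%Z then iter p (mop M a (- (e %/ p%:Z)%Z - 1)) w else 0).
Proof.
split.
  by move=> n hn e w; exact: (@part1 F p hp V A W M a hcomm_pos hcomm_neg n hn e w).
move=> e w.
have hp0 := @p_gt0 F p hp.
have [N0 h] := @core F p hp V A W M a hcomm_pos hcomm_neg 1 (ltn0Sn 0) e w.
have := h (N0 + `|e| + 1)%N; rewrite /Tk /vk => ->; last by lia.
have ccE : forall i, cc F 1 i = 1 by move=> i; rewrite /cc add1n subn1 /= binn.
have ddE : forall i, dd F 1 i = 1 by move=> i; rewrite /dd /= mul1r add1n subn1 /= binn.
case: ifP => H.
  have he := divzK H; move: he; set q := (e %/ p%:Z)%Z => he.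
  case: (lerP 0 q) => hq.
    rewrite (@sum_hit F W _ `|q|%N); first last.
    - by move=> i; apply/eqP/eqP; nia.
    - by nia.
    rewrite sum_nohit; last by move=> i; apply/eqP; nia.
    rewrite addr0 ccE scale1r; congr (iter p (mop M a _) w); lia.
  rewrite sum_nohit; last by move=> i; apply/eqP; nia.
  rewrite (@sum_hit F W _ `|- q - 1|%N); first last.
  - by move=> i; apply/eqP/eqP; nia.
  - by nia.
  rewrite add0r ddE scale1r; congr (iter p (mop M a _) w); lia.
rewrite !sum_nohit ?addr0 // => i; apply/negP => /eqP he; move/negbT: H; apply/negP;
  rewrite negbK; apply/dvdzP.
- by exists (- (1 + i)%:Z); lia.
- by exists i%:Z; lia.
Qed.
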